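(* Let $K$ be a class of $\Lambda^-$-structures closed under ultraproducts and direct products, let $n\in\mathbb{N}$ and $\mathcal{A}=\mathcal{A}(K,n)$. Then the class of all lattices isomorphic to some $A|L$ with $A\in\mathcal{A}$ is a quasivariety of lattices.
   Context: Fix a first-order (possibly multi-sorted) language $\Lambda^-$ having a designated sort $S$, and let $K$ be a class of $\Lambda^-$-structures. Let $\Lambda$ be the expansion of $\Lambda^-$ by a new sort $L$, binary operations $\cdot$ and $+$ on $L$, and a relation symbol $\rho\subseteq S\times S\times L$; $\rho$ is the only symbol relating sort $L$ to other sorts. For $n\in\mathbb{N}$, $\mathcal{A}(K,n)$ denotes the class of all $\Lambda$-structures $A$ such that: the reduct $A^-$ (obtained by removing sort $L$ and $\rho$) lies in $K$; $(L,\cdot,+)$ is a lattice; for each $a\in L$, $\varepsilon(a):=\{(x,y)\in S\times S: \rho(x,y,a)\}$ is an equivalence relation on $S$; $a\mapsto\varepsilon(a)$ is injective; $\varepsilon(a\cdot b)=\varepsilon(a)\cap\varepsilon(b)$ for all $a,b\in L$; and $\varepsilon(a+b)=\varepsilon(a)\bowtie_n\varepsilon(b)$ for all $a,b\in L$, where $\alpha\bowtie_n\beta=\alpha\circ\beta\circ\alpha\circ\cdots$ denotes the relational product with $n$ factors alternating between $\alpha$ and $\beta$. For $A\in\mathcal{A}$, $A|L$ denotes the lattice $(L,\cdot,+)$ of $A$. A quasivariety is a class of structures axiomatizable by quasi-identities (equivalently, containing the trivial structure and closed under isomorphic copies, substructures, direct products and ultraproducts). *)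

(* Defs.v *)
From mathcomp Require Import ssreflect ssrfun ssrbool eqtype ssrnat fintype.
Set Implicit Arguments.
Unset Strict Implicit.
Unset Printing Implicit Defensive.

Record signature := Signature {
  sort : Type;
  fsym : Type;
  rsym : Type;
  farity : fsym -> nat;
  fsort : forall f : fsym, 'I_(farity f) -> sort;
  fres : fsym -> sort;
  rarity : rsym -> nat;
  rsort : forall r : rsym, 'I_(rarity r) -> sort }.

Record structure (Sg : signature) := mkStructure {
  car : sort Sg -> Type;
  fn : forall f : fsym Sg, (forall k : 'I_(farity f), car (fsort k)) -> car (fres f);
  rel : forall r : rsym Sg, (forall k : 'I_(rarity r), car (rsort k)) -> Prop }.

Arguments car {Sg} _ _.
Arguments fn {Sg} _ _ _.
Arguments rel {Sg} _ _ _.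

Definition iso (Sg : signature) (A B : structure Sg) : Prop :=
  exists h : forall s, car A s -> car B s,
    [/\ (forall s, bijective (h s)),
        (forall f x, h _ (fn A f x) = fn B f (fun k => h _ (x k)))
      & (forall r x, rel A r x <-> rel B r (fun k => h _ (x k)))].

Definition prod_struct (Sg : signature) (I : Type) (A : I -> structure Sg)
  : structure Sg :=
  @mkStructure Sg (fun s => forall i, car (A i) s)
    (fun f x i => fn (A i) f (fun k => x k i))
    (fun r x => forall i, rel (A i) r (fun k => x k i)).

Definition ultrafilter (I : Type) (U : (I -> Prop) -> Prop) : Prop :=
  [/\ U (fun _ => True),
      ~ U (fun _ => False),
      (forall X Y : I -> Prop, (forall i, X i -> Y i) -> U X -> U Y),
      (forall X Y : I -> Prop, U X -> U Y -> U (fun i => X i /\ Y i))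
    & (forall X : I -> Prop, U X \/ U (fun i => ~ X i))].

(** B is (an isomorphic copy of) the ultraproduct of the family A modulo U:
    there is a surjection pi from the direct product onto B whose kernel is
    U-almost-everywhere equality, commuting with the operations, and such that
    a relation holds in B iff it holds U-almost everywhere (this is exactly
    the quotient structure  prod A / U, described up to isomorphism). *)
Definition is_ultraproduct (Sg : signature) (I : Type) (A : I -> structure Sg)
  (U : (I -> Prop) -> Prop) (B : structure Sg) : Prop :=
  exists pi : forall s, (forall i, car (A i) s) -> car B s,
    [/\ (forall s (b : car B s), exists x, pi s x = b),
        (forall s (x y : forall i, car (A i) s),
            pi s x = pi s y <-> U (fun i => x i = y i)),
        (forall f (x : forall k : 'I_(farity f), forall i, car (A i) (fsort k)),
            pi _ (fun i => fn (A i) f (fun k => x k i))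
            = fn B f (fun k => pi _ (x k)))
      & (forall r (x : forall k : 'I_(rarity r), forall i, car (A i) (rsort k)),
            rel B r (fun k => pi _ (x k))
            <-> U (fun i => rel (A i) r (fun k => x k i)))].

Definition sub_closed (Sg : signature) (A : structure Sg)
  (P : forall s, car A s -> Prop) : Prop :=
  forall f (x : forall k : 'I_(farity f), car A (fsort k)),
    (forall k, P _ (x k)) -> P _ (fn A f x).

Definition substructure (Sg : signature) (A : structure Sg)
  (P : forall s, car A s -> Prop) (hP : sub_closed P) : structure Sg :=
  @mkStructure Sg (fun s => {a : car A s | P s a})
    (fun f x => exist (P (fres f)) (fn A f (fun k => sval (x k)))
                      (hP f _ (fun k => svalP (x k))))
    (fun r x => rel A r (fun k => sval (x k))).

Definition trivial_struct (Sg : signature) (A : structure Sg) : Prop :=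
  (forall s, exists a : car A s, forall b, b = a) /\ (forall r x, rel A r x).

Definition closed_under_products (Sg : signature) (Q : structure Sg -> Prop) :=
  forall (I : Type) (A : I -> structure Sg),
    (forall i, Q (A i)) -> Q (prod_struct A).

Definition closed_under_ultraproducts (Sg : signature)
  (Q : structure Sg -> Prop) :=
  forall (I : Type) (A : I -> structure Sg) (U : (I -> Prop) -> Prop)
         (B : structure Sg),
    ultrafilter U -> (forall i, Q (A i)) -> is_ultraproduct A U B -> Q B.

Definition quasivariety (Sg : signature) (Q : structure Sg -> Prop) : Prop :=
  [/\ (exists A, Q A /\ trivial_struct A),
      (forall A B, Q A -> iso A B -> Q B),
      (forall A (P : forall s, car A s -> Prop) (hP : sub_closed P),
          Q A -> Q (substructure hP)),
      closed_under_products Q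
    & closed_under_ultraproducts Q].

Definition lat_sig : signature :=
  {| sort := unit; fsym := bool; rsym := Empty_set;
     farity := fun _ => 2; fsort := fun _ _ => tt; fres := fun _ => tt;
     rarity := fun e => match e with end;
     rsort := fun e => match e with end |}.

Definition ord_1_2 : 'I_2 := Ordinal (isT : 1 < 2).

(* fsym true = meet (.), fsym false = join (+) *)
Definition lmeet (A : structure lat_sig) (x y : car A tt) : car A tt :=
  fn A true (fun k : 'I_2 => if val k == 0 then x else y).
Definition ljoin (A : structure lat_sig) (x y : car A tt) : car A tt :=
  fn A false (fun k : 'I_2 => if val k == 0 then x else y).

Definition is_lattice (A : structure lat_sig) : Prop :=
  forall x y z : car A tt,
    lmeet x y = lmeet y x /\ ljoin x y = ljoin y x /\
    lmeet x (lmeet y z) = lmeet (lmeet x y) z /\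
    ljoin x (ljoin y z) = ljoin (ljoin x y) z /\
    lmeet x (ljoin x y) = x /\
    ljoin x (lmeet x y) = x.

Definition lattice_quasivariety (Q : structure lat_sig -> Prop) : Prop :=
  (forall A, Q A -> is_lattice A) /\ quasivariety Q.

(** A Lambda-structure: a Lambda^- -structure (its reduct A^-), a new sort L
    with binary operations . and +, and a relation rho on S x S x L. *)
Record lam_struct (Sg : signature) (S : sort Sg) := mkLam {
  red : structure Sg;
  Lcar : Type;
  Lmul : Lcar -> Lcar -> Lcar;
  Ladd : Lcar -> Lcar -> Lcar;
  rho : car red S -> car red S -> Lcar -> Prop }.

Arguments red {Sg S} _.
Arguments Lcar {Sg S} _.
Arguments Lmul {Sg S} _ _ _.
Arguments Ladd {Sg S} _ _ _.
Arguments rho {Sg S} _ _ _ _.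

Definition lat_of (Sg : signature) (S : sort Sg) (A : lam_struct S)
  : structure lat_sig :=
  @mkStructure lat_sig (fun _ => Lcar A)
    (fun f x => if f then Lmul A (x ord0) (x ord_1_2)
                else Ladd A (x ord0) (x ord_1_2))
    (fun e => match e with end).

Definition eps (Sg : signature) (S : sort Sg) (A : lam_struct S) (a : Lcar A)
  : car (red A) S -> car (red A) S -> Prop :=
  fun x y => rho A x y a.
Arguments eps {Sg S} _ _ _ _.

Fixpoint bowtie (T : Type) (n : nat) (al be : T -> T -> Prop) : T -> T -> Prop :=
  match n with
  | 0 => fun x y => x = y
  | m.+1 => fun x z => exists y, al x y /\ bowtie m be al y z
  end.

Definition equivalence_rel (T : Type) (R : T -> T -> Prop) : Prop :=
  [/\ forall x, R x x, forall x y, R x y -> R y x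
    & forall x y z, R x y -> R y z -> R x z].

Definition in_A (Sg : signature) (S : sort Sg) (K : structure Sg -> Prop)
  (n : nat) (A : lam_struct S) : Prop :=
  K (red A) /\
  is_lattice (lat_of A) /\
  (forall a, equivalence_rel (eps A a)) /\
  (forall a b, (forall x y, eps A a x y <-> eps A b x y) -> a = b) /\
  (forall a b x y, eps A (Lmul A a b) x y <-> eps A a x y /\ eps A b x y) /\
  (forall a b x y,
      eps A (Ladd A a b) x y <-> bowtie n (eps A a) (eps A b) x y).

(* Main.v *)
Require Import Defs.
From mathcomp Require Import ssreflect ssrfun ssrbool eqtype ssrnat fintype.
From Stdlib Require Import Classical ClassicalEpsilon FunctionalExtensionality ProofIrrelevance PropExtensionality.
Set Implicit Arguments. Unset Strict Implicit.

Lemma iso_refl Sg (A : structure Sg) : iso A A.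
Proof.
exists (fun s x => x); split => //.
by move=> s; exists id.
Qed.

Lemma iso_trans Sg (A B C : structure Sg) : iso A B -> iso B C -> iso A C.
Proof.
move=> [h1 [b1 f1 r1]] [h2 [b2 f2 r2]].
exists (fun s x => h2 s (h1 s x)); split.
- by move=> s; apply: (bij_comp (b2 s) (b1 s)).
- by move=> f x; rewrite f1 f2.
- by move=> r x; rewrite r1 r2.
Qed.

Lemma sigP_eq (T : Type) (P : T -> Prop) (x y : {a | P a}) :
  proj1_sig x = proj1_sig y -> x = y.
Proof.
case: x => x px; case: y => y py /= e; subst y.
by rewrite (proof_irrelevance _ px py).
Qed.

Lemma I2_eta T (x : 'I_2 -> T) :
  x = fun k : 'I_2 => if val k == 0 then x ord0 else x ord_1_2.
Proof.
apply: functional_extensionality => -[[|[|m]] H] //=; congr x; exact: val_inj.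
Qed.

Definition latlaws (T : Type) (m a : T -> T -> T) : Prop :=
  forall x y z : T,
    m x y = m y x /\ a x y = a y x /\
    m x (m y z) = m (m x y) z /\
    a x (a y z) = a (a x y) z /\
    m x (a x y) = x /\
    a x (m x y) = x.

Lemma lat_ofE Sg (S : sort Sg) (A : lam_struct S) :
  is_lattice (lat_of A) <-> latlaws (Lmul A) (Ladd A).
Proof. split; exact id. Qed.

Lemma is_latticeE (M : structure lat_sig) :
  is_lattice M <-> latlaws (@lmeet M) (@ljoin M).
Proof. split; exact id. Qed.

Definition liso (Sg : signature) (S : sort Sg) (A : lam_struct S)
  (M : structure lat_sig) (h : Lcar A -> car M tt) (k : car M tt -> Lcar A) :=
  [/\ cancel h k, cancel k h,
      (forall a b, h (Lmul A a b) = @lmeet M (h a) (h b))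
    & (forall a b, h (Ladd A a b) = @ljoin M (h a) (h b))].

Lemma iso_liso Sg (S : sort Sg) (A : lam_struct S) (M : structure lat_sig) :
  iso (lat_of A) M -> exists h k, @liso Sg S A M h k.
Proof.
move=> [h [bh fh _]].
case: (bh tt) => k hk kh.
exists (h tt), k; split => // a b.
- have := fh true (fun k : 'I_2 => if val k == 0 then a else b) => /= ->.
  rewrite /lmeet; congr fn; apply: functional_extensionality_dep => j.
  by case: (val j == 0).
- have := fh false (fun k : 'I_2 => if val k == 0 then a else b) => /= ->.
  rewrite /ljoin; congr fn; apply: functional_extensionality_dep => j.
  by case: (val j == 0).
Qed.

Lemma liso_iso Sg (S : sort Sg) (A : lam_struct S) (M : structure lat_sig) h k :
  @liso Sg S A M h k -> iso (lat_of A) M.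
Proof.
move=> [hk kh hm ha].
exists (fun s => match s with tt => h end); split.
- by case; exists k.
- case=> x /=.
  + rewrite hm /lmeet; congr fn; rewrite [in RHS](I2_eta (fun k => h (x k))) //.
  + rewrite ha /ljoin; congr fn; rewrite [in RHS](I2_eta (fun k => h (x k))) //.
- by case.
Qed.

Lemma liso_lattice Sg (S : sort Sg) (A : lam_struct S) M h k :
  is_lattice (lat_of A) -> @liso Sg S A M h k -> is_lattice M.
Proof.
move=> /lat_ofE L [hk kh hm ha] x y z.
rewrite -(kh x) -(kh y) -(kh z) -?hm -?ha -?hm -?ha -?hm -?ha -?hm -?ha.
case: (L (k x) (k y) (k z)) => [e1 [e2 [e3 [e4 [e5 e6]]]]].
by rewrite e5 e6; repeat split; congr h.
Qed.

Lemma bowtie_total (T : Type) n (al be : T -> T -> Prop) :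
  (forall x y, al x y) -> (forall x y, be x y) -> (forall x y : T, x = y) ->
  forall x y, bowtie n al be x y.
Proof.
move=> Ha Hb He; elim: n al be Ha Hb => [|m IH] al be Ha Hb x y /=.
- exact: He.
- by exists x; split; [apply: Ha | apply: IH].
Qed.

Definition Eempty Sg : structure Sg :=
  prod_struct (fun e : Empty_set => match e return structure Sg with end).

Lemma Eempty_K Sg (K : structure Sg -> Prop) : closed_under_products K -> K (Eempty Sg).
Proof. by move=> hp; apply: hp; case. Qed.

Lemma Eempty_single Sg s (x y : car (Eempty Sg) s) : x = y.
Proof. by apply: functional_extensionality_dep; case. Qed.

Definition good Sg (S : sort Sg) K n (A : lam_struct S) :=
  in_A K n A /\ inhabited (car (red A) S).

Lemma normalize Sg (S : sort Sg) K n (A : lam_struct S) :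
  closed_under_products K -> in_A K n A ->
  exists A' : lam_struct S, good K n A' /\ iso (lat_of A') (lat_of A).
Proof.
move=> hp HA.
case: (classic (inhabited (car (red A) S))) => Hi.
  by exists A; split => //; apply: iso_refl.
exists (@mkLam Sg S (Eempty Sg) (Lcar A) (Lmul A) (Ladd A) (fun _ _ _ => True)).
split; last by apply: iso_refl.
case: HA => HK [HL [He [Hinj [Hm Ha]]]].
split; last by constructor; case.
split; first exact: Eempty_K.
split; first exact: HL.
split; first by move=> a; split.
split.
  move=> a b _; apply: Hinj => x y; exfalso; apply: Hi; exact: (inhabits x).
split; first by move=> a b x y; split.
move=> a b x y; split => // _; apply: bowtie_total => //; exact: Eempty_single.
Qed.

Definition QQ Sg (S : sort Sg) K n (M : structure lat_sig) :=
  exists A : lam_struct S, in_A K n A /\ iso (lat_of A) M.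

Lemma QQ_good Sg (S : sort Sg) K n M :
  closed_under_products K -> @QQ Sg S K n M ->
  exists A : lam_struct S, good K n A /\ exists h k, @liso Sg S A M h k.
Proof.
move=> hp [A [HA Hiso]].
case: (normalize hp HA) => A' [HA' Hi'].
exists A'; split => //; apply: iso_liso; exact: iso_trans Hi' Hiso.
Qed.

Lemma good_QQ Sg (S : sort Sg) K n M (A : lam_struct S) h k :
  good K n A -> @liso Sg S A M h k -> @QQ Sg S K n M.
Proof. by move=> [HA _] Hl; exists A; split => //; apply: liso_iso Hl. Qed.

Lemma QQ_lattice Sg (S : sort Sg) K n M :
  closed_under_products K -> @QQ Sg S K n M -> is_lattice M.
Proof.
move=> hp /(QQ_good hp) [A [[[_ [HL _]] _] [h [k Hl]]]].
exact: liso_lattice HL Hl.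
Qed.

Lemma QQ_trivial Sg (S : sort Sg) K n :
  closed_under_products K ->
  exists M, @QQ Sg S K n M /\ trivial_struct M.
Proof.
move=> hp.
pose A := @mkLam Sg S (Eempty Sg) unit (fun _ _ => tt) (fun _ _ => tt) (fun _ _ _ => True).
exists (lat_of A); split.
- exists A; split; last exact: iso_refl.
  split; first exact: Eempty_K.
  split; first by move=> x y z /=; case: x; case: y; case: z.
  split; first by move=> a; split.
  split; first by move=> [] [].
  split; first by move=> a b x y; split.
  move=> a b x y; split => // _; apply: bowtie_total => //; exact: Eempty_single.
- split; first by move=> s; exists tt; case.
  by case.
Qed.

Lemma QQ_iso Sg (S : sort Sg) K n M N :
  @QQ Sg S K n M -> iso M N -> @QQ Sg S K n N.
Proof. by move=> [A [HA Hi]] Hj; exists A; split => //; exact: iso_trans Hi Hj. Qed.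

Lemma QQ_sub Sg (S : sort Sg) K n M (P : forall s, car M s -> Prop)
  (hP : sub_closed P) :
  closed_under_products K -> @QQ Sg S K n M -> @QQ Sg S K n (substructure hP).
Proof.
move=> hp /(QQ_good hp) [A [[[HK [HL [He [Hinj [Hm Ha]]]]] Hi] [h [k [hk kh hm ha]]]]].
have mP : forall a b : {a : Lcar A | P tt (h a)},
    P tt (h (Lmul A (proj1_sig a) (proj1_sig b))).
  move=> [a pa] [b pb] /=; rewrite hm.
  apply: (hP true) => j /=; by case: (val j == 0).
have aP : forall a b : {a : Lcar A | P tt (h a)},
    P tt (h (Ladd A (proj1_sig a) (proj1_sig b))).
  move=> [a pa] [b pb] /=; rewrite ha.
  apply: (hP false) => j /=; by case: (val j == 0).
pose A' := @mkLam Sg S (red A) {a : Lcar A | P tt (h a)}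
  (fun a b => exist _ _ (mP a b)) (fun a b => exist _ _ (aP a b))
  (fun x y a => rho A x y (proj1_sig a)).
have kP : forall z : {m : car M tt | P tt m}, P tt (h (k (proj1_sig z))).
  by move=> [z pz] /=; rewrite kh.
apply: (@good_QQ Sg S K n (substructure hP) A'
  (fun a => exist (P tt) (h (proj1_sig a)) (proj2_sig a))
  (fun z => exist (fun a => P tt (h a)) (k (proj1_sig z)) (kP z))).
- split => //; split => //.
  split.
    move=> x y z; move/lat_ofE: HL => HL.
    case: (HL (proj1_sig x) (proj1_sig y) (proj1_sig z)) => [e1 [e2 [e3 [e4 [e5 e6]]]]].
    by repeat split; apply: sigP_eq => /=.
  split; first by move=> a; apply: He.
  split; first by move=> a b H; apply: sigP_eq; apply: Hinj.
  split; first by move=> a b x y; apply: Hm.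
  by move=> a b x y; apply: Ha.
- split.
  + by move=> a; apply: sigP_eq => /=; rewrite hk.
  + by move=> z; apply: sigP_eq => /=; rewrite kh.
  + move=> a b; apply: sigP_eq => /=; rewrite hm /lmeet; congr fn.
    by apply: functional_extensionality_dep => j; case: (val j == 0).
  + move=> a b; apply: sigP_eq => /=; rewrite ha /ljoin; congr fn.
    by apply: functional_extensionality_dep => j; case: (val j == 0).
Qed.

Definition cid := constructive_indefinite_description.

Definition upd (I : Type) (X : I -> Type) (f : forall i, X i) (i : I) (v : X i) :
  forall j, X j :=
  fun j => match excluded_middle_informative (i = j) with
           | left e => eq_rect i X v j e
           | right _ => f j end.

Lemma upd2 (I : Type) (X Y : I -> Type) (f : forall i, X i) (g : forall i, Y i)
  i u v (P : forall j, X j -> Y j -> Prop) :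
  P i u v -> (forall j, P j (f j) (g j)) -> forall j, P j (upd f u j) (upd g v j).
Proof.
move=> Hi Hf j; rewrite /upd; case: (excluded_middle_informative (i = j)) => [e|ne] //.
by case: j / e.
Qed.

Lemma upd_at (I : Type) (X : I -> Type) (f : forall i, X i) i (v : X i) : upd f v i = v.
Proof.
rewrite /upd; case: (excluded_middle_informative (i = i)) => [e|ne] //.
by rewrite (proof_irrelevance _ e erefl).
Qed.

Lemma bowtie_prod (I : Type) (X : I -> Type) n
  (al be : forall i, X i -> X i -> Prop) (x y : forall i, X i) :
  bowtie n (fun x y => forall i, al i (x i) (y i)) (fun x y => forall i, be i (x i) (y i)) x y
  <-> forall i, bowtie n (al i) (be i) (x i) (y i).
Proof.
elim: n al be x => [|m IH] al be x /=.
- split; first by move=> ->.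
  by move=> H; apply: functional_extensionality_dep.
- split.
  + move=> [z [Hz Hb]] i; exists (z i); split; first exact: Hz.
    by move/IH: Hb; apply.
  + move=> H.
    pose z := fun i => proj1_sig (cid (H i)).
    exists z; split.
      by move=> i; exact: (proj1 (proj2_sig (cid (H i)))).
    apply/IH => i; exact: (proj2 (proj2_sig (cid (H i)))).
Qed.

Lemma liso_inv Sg (S : sort Sg) (A : lam_struct S) M h k :
  @liso Sg S A M h k ->
  (forall u v, k (@lmeet M u v) = Lmul A (k u) (k v)) /\
  (forall u v, k (@ljoin M u v) = Ladd A (k u) (k v)).
Proof.
move=> [hk kh hm ha]; split=> u v.
- by rewrite -{1}(kh u) -{1}(kh v) -hm hk.
- by rewrite -{1}(kh u) -{1}(kh v) -ha hk.
Qed.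

Lemma prod_meet (I : Type) (M : I -> structure lat_sig) b c i :
  @lmeet (prod_struct M) b c i = @lmeet (M i) (b i) (c i).
Proof.
rewrite /lmeet /=; congr fn; apply: functional_extensionality_dep => j.
by case: (val j == 0).
Qed.

Lemma prod_join (I : Type) (M : I -> structure lat_sig) b c i :
  @ljoin (prod_struct M) b c i = @ljoin (M i) (b i) (c i).
Proof.
rewrite /ljoin /=; congr fn; apply: functional_extensionality_dep => j.
by case: (val j == 0).
Qed.

Lemma QQ_prod Sg (S : sort Sg) K n :
  closed_under_products K -> closed_under_products (@QQ Sg S K n).
Proof.
move=> hp I M H.
have H1 : forall i, {A : lam_struct S | good K n A /\ exists h k, @liso Sg S A (M i) h k}.
  by move=> i; apply: cid; apply: QQ_good.
pose AA i := proj1_sig (H1 i).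
have H2 : forall i, {h | exists k, @liso Sg S (AA i) (M i) h k}.
  by move=> i; apply: cid; exact: (proj2 (proj2_sig (H1 i))).
pose hh i := proj1_sig (H2 i).
have H3 : forall i, {k | @liso Sg S (AA i) (M i) (hh i) k}.
  by move=> i; apply: cid; exact: (proj2_sig (H2 i)).
pose kk i := proj1_sig (H3 i).
have Hl : forall i, @liso Sg S (AA i) (M i) (hh i) (kk i).
  by move=> i; exact: (proj2_sig (H3 i)).
have Hg : forall i, good K n (AA i) by move=> i; exact: (proj1 (proj2_sig (H1 i))).
have H4 : forall i, {x : car (red (AA i)) S | True}.
  move=> i; apply: cid; case: (proj2 (Hg i)) => x; by exists x.
pose d i := proj1_sig (H4 i).
pose PM := prod_struct M.
pose A := @mkLam Sg S (prod_struct (fun i => red (AA i))) (car PM tt)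
  (@lmeet PM) (@ljoin PM)
  (fun x y b => forall i, rho (AA i) (x i) (y i) (kk i (b i))).
apply: (@good_QQ Sg S K n PM A id id); last by split.
have HML : forall i, latlaws (@lmeet (M i)) (@ljoin (M i)).
  move=> i; apply/is_latticeE; case: (Hg i) => [[_ [HL _]] _].
  exact: liso_lattice HL (Hl i).
split; last first.
  by constructor; exact: d.
split; first by apply: hp => i; case: (Hg i) => [[HK _] _].
split.
  apply/lat_ofE; change (latlaws (@lmeet (prod_struct M)) (@ljoin (prod_struct M))) => x y z.
  have e := fun i => HML i (x i) (y i) (z i).
  repeat split; apply: functional_extensionality_dep => i;
    rewrite ?prod_meet ?prod_join ?prod_meet ?prod_join;
    case: (e i) => [e1 [e2 [e3 [e4 [e5 e6]]]]] //.
split.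
  move=> a; split.
  - move=> x i; case: (Hg i) => [[_ [_ [He _]]] _]; case: (He (kk i (a i))) => r _ _; exact: r.
  - move=> x y Hxy i; case: (Hg i) => [[_ [_ [He _]]] _]; case: (He (kk i (a i))) => _ s _; apply: s; exact: Hxy.
  - move=> x y z Hxy Hyz i; case: (Hg i) => [[_ [_ [He _]]] _]; case: (He (kk i (a i))) => _ _ t; apply: t; [exact: Hxy|exact: Hyz].
split.
  move=> a b Heq; apply: functional_extensionality_dep => i.
  case: (Hg i) => [[_ [_ [He [Hinj _]]]] _].
  case: (Hl i) => hk kh _ _.
  rewrite -(kh (a i)) -(kh (b i)); congr hh.
  apply: Hinj => u v.
  have key : forall c : car PM tt,
      eps A c (upd d u) (upd d v) <-> eps (AA i) (kk i (c i)) u v.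
    move=> c; rewrite /eps /=; split.
    - by move=> Hc; have := Hc i; rewrite !upd_at.
    - move=> Hc j.
      apply: (upd2 (P := fun j x y => rho (AA j) x y (kk j (c j)))) => //.
      move=> j'; case: (Hg j') => [[_ [_ [He' _]]] _].
      by case: (He' (kk j' (c j'))) => r _ _; apply: r.
  by rewrite -!key Heq.
have Hrho : forall x y c, eps A c x y <-> forall i, rho (AA i) (x i) (y i) (kk i (c i)).
  by [].
have HmA : forall a b i, Lmul A a b i = @lmeet (M i) (a i) (b i).
  by move=> a b i; exact: prod_meet.
have HaA : forall a b i, Ladd A a b i = @ljoin (M i) (a i) (b i).
  by move=> a b i; exact: prod_join.
split.
  move=> a b x y; rewrite !Hrho.
  split.
  - move=> Hc; split=> i; have := Hc i; rewrite HmA (proj1 (liso_inv (Hl i)));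
      case: (Hg i) => [[_ [_ [_ [_ [Hm _]]]]] _]; by case/Hm.
  - move=> [Ha Hb] i; rewrite HmA (proj1 (liso_inv (Hl i)));
      case: (Hg i) => [[_ [_ [_ [_ [Hm _]]]]] _]; apply/Hm; split; [exact: Ha | exact: Hb].
move=> a b x y.
rewrite Hrho.
have -> : bowtie n (eps A a) (eps A b) x y <->
  bowtie n (fun x y => forall i, rho (AA i) (x i) (y i) (kk i (a i)))
           (fun x y => forall i, rho (AA i) (x i) (y i) (kk i (b i))) x y by [].
rewrite (@bowtie_prod I (fun i => car (red (AA i)) S) n (fun i x y => rho (AA i) x y (kk i (a i)))
                             (fun i x y => rho (AA i) x y (kk i (b i)))).
split.
- move=> Hc i; have := Hc i; rewrite HaA (proj2 (liso_inv (Hl i))).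
  case: (Hg i) => [[_ [_ [_ [_ [_ Ha]]]]] _]; by move/Ha.
- move=> Hc i; rewrite HaA (proj2 (liso_inv (Hl i))).
  case: (Hg i) => [[_ [_ [_ [_ [_ Ha]]]]] _]; apply/Ha; exact: Hc.
Qed.

Lemma U_top I (U : (I -> Prop) -> Prop) : ultrafilter U -> U (fun _ => True).
Proof. by case. Qed.

Lemma U_mono I (U : (I -> Prop) -> Prop) (X Y : I -> Prop) :
  ultrafilter U -> (forall i, X i -> Y i) -> U X -> U Y.
Proof. by case=> _ _ H _ _; apply: H. Qed.

Lemma U_and I (U : (I -> Prop) -> Prop) (X Y : I -> Prop) :
  ultrafilter U -> U X -> U Y -> U (fun i => X i /\ Y i).
Proof. by case=> _ _ _ H _; apply: H. Qed.

Lemma U_all I (U : (I -> Prop) -> Prop) (X : I -> Prop) :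
  ultrafilter U -> (forall i, X i) -> U X.
Proof. move=> HU H; apply: (U_mono HU _ (U_top HU)) => i _; exact: H. Qed.

Lemma U_false I (U : (I -> Prop) -> Prop) (X : I -> Prop) :
  ultrafilter U -> U X -> U (fun i => ~ X i) -> False.
Proof.
move=> HU H1 H2; have := U_and HU H1 H2.
case: HU => _ Hb Hm _ _ H; apply: Hb; apply: (Hm _ _ _ H) => i [a b]; exact: b a.
Qed.

Lemma U_em I (U : (I -> Prop) -> Prop) (X : I -> Prop) :
  ultrafilter U -> U X \/ U (fun i => ~ X i).
Proof. by case. Qed.

Lemma U_fin I (U : (I -> Prop) -> Prop) m (X : 'I_m -> I -> Prop) :
  ultrafilter U -> (forall k, U (X k)) -> U (fun i => forall k, X k i).
Proof.
move=> HU H.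
suff : forall j, j <= m -> U (fun i => forall k : 'I_m, val k < j -> X k i).
  move/(_ m (leqnn m)); apply: U_mono => // i Hi k; apply: Hi; exact: ltn_ord.
elim=> [|j IH] Hj.
  by apply: U_all => // i k.
have Hjm : j < m by [].
have := U_and HU (IH (ltnW Hj)) (H (Ordinal Hjm)).
apply: U_mono => // i [H1 H2] k Hk.
rewrite ltnS leq_eqVlt in Hk; case/orP: Hk => [/eqP Hk|Hk].
- have -> : k = Ordinal Hjm by apply: val_inj.
  exact: H2.
- exact: H1.
Qed.

Definition Qt I (X : I -> Type) (U : (I -> Prop) -> Prop) :=
  {P : (forall i, X i) -> Prop | exists x, P = fun y => U (fun i => x i = y i)}.
Arguments Qt {I} X U.

Definition cls I (X : I -> Type) (U : (I -> Prop) -> Prop) (x : forall i, X i) : Qt X U :=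
  exist _ (fun y => U (fun i => x i = y i)) (ex_intro _ x erefl).

Lemma cls_eq I (X : I -> Type) (U : (I -> Prop) -> Prop) (x y : forall i, X i) :
  ultrafilter U -> cls U x = cls U y <-> U (fun i => x i = y i).
Proof.
move=> HU; split.
- move=> /(f_equal (@proj1_sig _ _)) /= E.
  have := f_equal (fun P => P y) E => /= ->.
  by apply: U_all.
- move=> H; apply: sigP_eq => /=; apply: functional_extensionality => z.
  apply: propositional_extensionality; split => Hz.
  + have := U_and HU H Hz; apply: U_mono => // i [-> ->] //.
  + have := U_and HU H Hz; apply: U_mono => // i [-> ->] //.
Qed.

Lemma cls_surj I (X : I -> Type) (U : (I -> Prop) -> Prop) (q : Qt X U) :
  exists x : forall i, X i, cls U x = q.
Proof.
case: q => P [x e]; exists x; apply: sigP_eq => /=; by rewrite e.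
Qed.

Definition rep I (X : I -> Type) (U : (I -> Prop) -> Prop) (q : Qt X U) : forall i, X i :=
  proj1_sig (cid (cls_surj q)).

Lemma cls_rep I (X : I -> Type) (U : (I -> Prop) -> Prop) (q : Qt X U) :
  cls U (rep q) = q.
Proof. exact: (proj2_sig (cid (cls_surj q))). Qed.

Lemma rep_cls I (X : I -> Type) (U : (I -> Prop) -> Prop) (x : forall i, X i) :
  ultrafilter U -> U (fun i => rep (cls U x) i = x i).
Proof. by move=> HU; apply/(cls_eq _ _ HU); rewrite cls_rep. Qed.

Definition UPstruct Sg I (A : I -> structure Sg) (U : (I -> Prop) -> Prop) : structure Sg :=
  @mkStructure Sg (fun s => Qt (fun i => car (A i) s) U)
    (fun f c => cls U (fun i => fn (A i) f (fun k => rep (c k) i)))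
    (fun r c => U (fun i => Defs.rel (A i) r (fun k => rep (c k) i))).

Lemma UP_is Sg I (A : I -> structure Sg) (U : (I -> Prop) -> Prop) :
  ultrafilter U -> is_ultraproduct A U (UPstruct A U).
Proof.
move=> HU; exists (fun s x => cls U x); split.
- by move=> s b; apply: cls_surj.
- by move=> s x y; apply: cls_eq.
- move=> f x /=; apply/(cls_eq _ _ HU).
  have := U_fin HU (fun k => rep_cls (X := fun i => car (A i) (fsort k)) (x k) HU).
  apply: U_mono => // i Hi; congr fn; apply: functional_extensionality_dep => k.
  by rewrite Hi.
- move=> r x /=.
  have Hf := U_fin HU (fun k => rep_cls (X := fun i => car (A i) (rsort k)) (x k) HU).
  split => H; have := U_and HU Hf H; apply: U_mono => // i [Hi Hr].
  + have <- : (fun k => rep (cls U (x k)) i) = (fun k => x k i) => //.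
    by apply: functional_extensionality_dep => k; rewrite Hi.
  + have -> : (fun k => rep (cls U (x k)) i) = (fun k => x k i) => //.
    by apply: functional_extensionality_dep => k; rewrite Hi.
Qed.

Lemma QQ_ultra Sg (S : sort Sg) K n :
  closed_under_products K -> closed_under_ultraproducts K ->
  closed_under_ultraproducts (@QQ Sg S K n).
Proof.
move=> hp hu I M U B HU H [piB [piS piK piF piR]].
have H1 : forall i, {A : lam_struct S | good K n A /\ exists h k, @liso Sg S A (M i) h k}.
  by move=> i; apply: cid; apply: QQ_good.
pose AA i := proj1_sig (H1 i).
have H2 : forall i, {h | exists k, @liso Sg S (AA i) (M i) h k}.
  by move=> i; apply: cid; exact: (proj2 (proj2_sig (H1 i))).
pose hh i := proj1_sig (H2 i).
have H3 : forall i, {k | @liso Sg S (AA i) (M i) (hh i) k}.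
  by move=> i; apply: cid; exact: (proj2_sig (H2 i)).
pose kk i := proj1_sig (H3 i).
have Hl : forall i, @liso Sg S (AA i) (M i) (hh i) (kk i).
  by move=> i; exact: (proj2_sig (H3 i)).
have Hg : forall i, good K n (AA i) by move=> i; exact: (proj1 (proj2_sig (H1 i))).
have H4 : forall i, {x : car (red (AA i)) S | True}.
  move=> i; apply: cid; case: (proj2 (Hg i)) => x; by exists x.
pose d i := proj1_sig (H4 i).
pose D := UPstruct (fun i => red (AA i)) U.
pose g (a : forall i, Lcar (AA i)) : car B tt := piB tt (fun i => hh i (a i)).
pose X := fun i => car (red (AA i)) S.
pose rhoA (p q : car D S) (b : car B tt) :=
  exists a, g a = b /\ U (fun i => rho (AA i) (rep p i) (rep q i) (a i)).
pose A := @mkLam Sg S D (car B tt) (@lmeet B) (@ljoin B) rhoA.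
apply: (@good_QQ Sg S K n B A id id); last by split.
have gK : forall a a', g a = g a' <-> U (fun i => a i = a' i).
  move=> a a'; rewrite /g piK; split; apply: U_mono => // i.
  - by case: (Hl i) => hk _ _ _ /(f_equal (kk i)); rewrite !hk.
  - by move=> ->.
have gS : forall b, exists a, g a = b.
  move=> b; case: (piS tt b) => z <-.
  exists (fun i => kk i (z i)); rewrite /g; congr piB.
  apply: functional_extensionality_dep => i; by case: (Hl i) => _ kh _ _; rewrite kh.
have gM : forall a a', @lmeet B (g a) (g a') = g (fun i => Lmul (AA i) (a i) (a' i)).
  move=> a a'; rewrite /g.
  have -> : (fun i => hh i (Lmul (AA i) (a i) (a' i))) =
      (fun i => fn (M i) true (fun k : 'I_2 =>
          (if val k == 0 then (fun i => hh i (a i)) else (fun i => hh i (a' i))) i)).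
    apply: functional_extensionality_dep => i; case: (Hl i) => _ _ hm _; rewrite hm /lmeet.
    by congr fn; apply: functional_extensionality_dep => j; case: (val j == 0).
  rewrite (piF true) /lmeet; congr fn; apply: functional_extensionality_dep => j.
  by case: (val j == 0).
have gJ : forall a a', @ljoin B (g a) (g a') = g (fun i => Ladd (AA i) (a i) (a' i)).
  move=> a a'; rewrite /g.
  have -> : (fun i => hh i (Ladd (AA i) (a i) (a' i))) =
      (fun i => fn (M i) false (fun k : 'I_2 =>
          (if val k == 0 then (fun i => hh i (a i)) else (fun i => hh i (a' i))) i)).
    apply: functional_extensionality_dep => i; case: (Hl i) => _ _ _ ha; rewrite ha /ljoin.
    by congr fn; apply: functional_extensionality_dep => j; case: (val j == 0).
  rewrite (piF false) /ljoin; congr fn; apply: functional_extensionality_dep => j.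
  by case: (val j == 0).
have rhoE : forall (x y : forall i, X i) a,
    rhoA (cls U x) (cls U y) (g a) <-> U (fun i => rho (AA i) (x i) (y i) (a i)).
  move=> x y a; split.
  - move=> [a' [/gK Ea Hr]].
    have := U_and HU (U_and HU (rep_cls x HU) (rep_cls y HU)) (U_and HU Ea Hr).
    by apply: U_mono => // i [[-> ->] [<- ?]].
  - move=> Hr; exists a; split => //.
    have := U_and HU (U_and HU (rep_cls x HU) (rep_cls y HU)) Hr.
    by apply: U_mono => // i [[-> ->] ?].
have clsS : forall p : car D S, exists x : forall i, X i, cls U x = p.
  by move=> p; apply: cls_surj.
have Hin : forall i, in_A K n (AA i) by move=> i; case: (Hg i).
split; last by constructor; exact: (cls U d).
split.
  apply: (hu _ (fun i => red (AA i)) U D HU); first by move=> i; case: (Hin i).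
  exact: UP_is.
split.
  apply/lat_ofE; change (latlaws (@lmeet B) (@ljoin B)) => x y z.
  case: (gS x) => a <-; case: (gS y) => b <-; case: (gS z) => c <-.
  rewrite ?gM ?gJ ?gM ?gJ ?gM ?gJ ?gM ?gJ.
  have e := fun i => proj1 (lat_ofE _) (proj1 (proj2 (Hin i))) (a i) (b i) (c i).
  repeat split; congr g; apply: functional_extensionality_dep => i;
    case: (e i) => [e1 [e2 [e3 [e4 [e5 e6]]]]] //.
split.
  move=> b; case: (gS b) => a <-.
  have Heq : forall i, Defs.equivalence_rel (eps (AA i) (a i)).
    by move=> i; case: (Hin i) => _ [_ [He _]].
  split.
  - move=> p; case: (clsS p) => x <-; apply/rhoE; apply: U_all => // i.
    by case: (Heq i) => r _ _; apply: r.
  - move=> p q; case: (clsS p) => x <-; case: (clsS q) => y <-.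
    move/rhoE => Hr; apply/rhoE; apply: U_mono Hr => // i.
    by case: (Heq i) => _ s _; apply: s.
  - move=> p q r; case: (clsS p) => x <-; case: (clsS q) => y <-; case: (clsS r) => z <-.
    move/rhoE => H1' /rhoE H2'; apply/rhoE; have := U_and HU H1' H2'; apply: U_mono => // i [u v].
    by case: (Heq i) => _ _ t; apply: t u v.
split.
  move=> b c; case: (gS b) => a <-; case: (gS c) => a' <- Heps.
  apply/gK; case: (U_em (fun i => a i = a' i) HU) => // Hne.
  exfalso.
  have Hc : forall i, exists uv : X i * X i,
      a i <> a' i -> ~ (rho (AA i) uv.1 uv.2 (a i) <-> rho (AA i) uv.1 uv.2 (a' i)).
    move=> i; case: (classic (a i = a' i)) => E.
      by exists (d i, d i).
    apply: NNPP => Hn; apply: E.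
    case: (Hin i) => _ [_ [_ [Hinj _]]]; apply: Hinj => u v.
    apply: NNPP => Hn2; apply: Hn; exists (u, v) => _; exact: Hn2.
  pose x i := (proj1_sig (cid (Hc i))).1.
  pose y i := (proj1_sig (cid (Hc i))).2.
  have Hd : U (fun i => ~ (rho (AA i) (x i) (y i) (a i) <-> rho (AA i) (x i) (y i) (a' i))).
    apply: U_mono Hne => // i; exact: (proj2_sig (cid (Hc i))).
  have := Heps (cls U x) (cls U y); rewrite /eps /= !rhoE => Hiff.
  case: (U_em (fun i => rho (AA i) (x i) (y i) (a i)) HU) => Ha.
  + have Ha' := proj1 Hiff Ha.
    have := U_and HU (U_and HU Ha Ha') Hd.
    move/(U_mono HU (Y := fun _ => False)) => HF.
    apply: (U_false HU (HF _)); first by move=> i [[u v] w]; apply: w; split.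
    by apply: U_all => // i [].
  + have Ha' : U (fun i => ~ rho (AA i) (x i) (y i) (a' i)).
      case: (U_em (fun i => rho (AA i) (x i) (y i) (a' i)) HU) => // Hb.
      exfalso; exact: (U_false HU (proj2 Hiff Hb) Ha).
    have := U_and HU (U_and HU Ha Ha') Hd.
    move/(U_mono HU (Y := fun _ => False)) => HF.
    apply: (U_false HU (HF _)); last by apply: U_all => // i [].
    by move=> i [[u v] w]; apply: w; split.
split.
  move=> b c p q; case: (gS b) => a <-; case: (gS c) => a' <-.
  case: (clsS p) => x <-; case: (clsS q) => y <-.
  rewrite /eps /= gM !rhoE.
  have Hm : forall i u v, rho (AA i) u v (Lmul (AA i) (a i) (a' i)) <->
      rho (AA i) u v (a i) /\ rho (AA i) u v (a' i).
    by move=> i u v; case: (Hin i) => _ [_ [_ [_ [Hm _]]]]; apply: Hm.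
  split.
  - move=> Hr; split; apply: U_mono Hr => // i /Hm []//.
  - move=> [Hr1 Hr2]; have := U_and HU Hr1 Hr2; apply: U_mono => // i ?; exact/Hm.
have Hbow : forall m (a a' : forall i, Lcar (AA i)) (x y : forall i, X i),
    bowtie m (eps A (g a)) (eps A (g a')) (cls U x) (cls U y) <->
    U (fun i => bowtie m (eps (AA i) (a i)) (eps (AA i) (a' i)) (x i) (y i)).
  elim=> [|m IH] a a' x y /=.
    exact: cls_eq.
  split.
  - move=> [p [Hp Hb]]; case: (clsS p) => z Ez; subst p.
    move: Hp; rewrite /eps /= rhoE => Hp.
    move/IH: Hb => Hb.
    have := U_and HU Hp Hb; apply: U_mono => // i [u v]; by exists (z i).
  - move=> Hr.
    have Hc : forall i, exists z : X i,
        (exists w, eps (AA i) (a i) (x i) w /\ bowtie m (eps (AA i) (a' i)) (eps (AA i) (a i)) w (y i)) ->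
        eps (AA i) (a i) (x i) z /\ bowtie m (eps (AA i) (a' i)) (eps (AA i) (a i)) z (y i).
      move=> i; case: (classic (exists w, eps (AA i) (a i) (x i) w /\
                      bowtie m (eps (AA i) (a' i)) (eps (AA i) (a i)) w (y i))) => E.
        by case: E => w Hw; exists w.
      by exists (d i).
    pose z i := proj1_sig (cid (Hc i)).
    have Hz : U (fun i => eps (AA i) (a i) (x i) (z i) /\
                  bowtie m (eps (AA i) (a' i)) (eps (AA i) (a i)) (z i) (y i)).
      apply: U_mono Hr => // i Hi; exact: (proj2_sig (cid (Hc i)) Hi).
    exists (cls U z); split.
      rewrite /eps /= rhoE; apply: U_mono Hz => // i []//.
    apply/IH; apply: U_mono Hz => // i []//.
move=> b c p q; case: (gS b) => a <-; case: (gS c) => a' <-.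
case: (clsS p) => x <-; case: (clsS q) => y <-.
rewrite Hbow /eps /= gJ rhoE.
split; apply: U_mono => // i; case: (Hin i) => _ [_ [_ [_ [_ Ha]]]]; by move/Ha.
Qed.

Theorem corollary4 (Sg : signature) (S : sort Sg) (K : structure Sg -> Prop)
  (n : nat)
  (hprod : closed_under_products K)
  (hultra : closed_under_ultraproducts K) :
  lattice_quasivariety
    (fun M : structure lat_sig =>
       exists A : lam_struct S, in_A K n A /\ iso (lat_of A) M).
Proof.
split.
  by move=> M HM; exact: (QQ_lattice hprod HM).
split.
- exact: QQ_trivial.
- by move=> M N HM Hi; exact: (QQ_iso HM Hi).
- by move=> M P hP HM; exact: (QQ_sub hP hprod HM).
- exact: QQ_prod.
- exact: QQ_ultra.
Qed.
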